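(* Let $G$ be a tree with vertices $1,2,\ldots,n$ and edges $e_1,\ldots,e_{n-1}$, and let $M$ be its $n\times(n-1)$ vertex-edge incidence matrix. Define the $(n-1)\times n$ matrix $H=[h_{i,j}]$ (rows indexed by edges, columns by vertices) by $$h_{i,j}=\frac{(-1)^{d(e_i,j)}}{n}\begin{cases}|G_T(e_i)| & \text{if } j\in G_H(e_i),\\ |G_H(e_i)| & \text{if } j\in G_T(e_i).\end{cases}$$ Then $H$ is the Moore-Penrose inverse $M^+$ of $M$.
   Context: Each edge is written $e_i=\{l_i,m_i\}$ with $l_i<m_i$. The incidence matrix $M$ has $(i,j)$-entry $1$ if vertex $i$ is incident with edge $e_j$ and $0$ otherwise. $d(u,v)$ denotes the usual graph distance between vertices; for a vertex $j$ and edge $e_i=\{l_i,m_i\}$, $d(j,e_i)=d(e_i,j):=\min\{d(j,l_i),d(j,m_i)\}$. The head component $G_H(e_i)$ is the connected component of $G\setminus e_i$ containing $m_i$; the tail component $G_T(e_i)$ is the component of $G\setminus e_i$ containing $l_i$. $|X|$ denotes the number of vertices of a graph $X$. The Moore-Penrose inverse of a real $p\times q$ matrix $A$ is the unique $q\times p$ real matrix $A^+$ with $AA^+A=A$, $A^+AA^+=A^+$, $(AA^+)^T=AA^+$, $(A^+A)^T=A^+A$. *)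

(* Defs.v *)
From HB Require Import structures.
From mathcomp Require Import all_boot all_order all_algebra.
Set Implicit Arguments. Unset Strict Implicit. Unset Printing Implicit Defensive.
Import Order.TTheory GRing.Theory Num.Theory.
Local Open Scope ring_scope.

(* A graph on vertex set 'I_n with edges indexed by 'I_k; edge e_i = {l i, m i}. *)
Section Graph.
Variables (n k : nat) (l m : 'I_k -> 'I_n).

Definition adj : rel 'I_n :=
  [rel u v | [exists i, ((l i == u) && (m i == v)) || ((l i == v) && (m i == u))]].

Definition adj_wo (i : 'I_k) : rel 'I_n :=
  [rel u v | [exists i', (i' != i) &&
     (((l i' == u) && (m i' == v)) || ((l i' == v) && (m i' == u)))]].

Definition simple_edges : Prop :=
  (forall i, (l i < m i)%N) /\
  (forall i i', l i = l i' -> m i = m i' -> i = i').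

Definition connected_graph : Prop := forall u v, connect adj u v.

(* A tree: a connected simple graph (on n vertices with exactly n-1 edges,
   enforced by the choice k = n.-1 in the theorem). *)
Definition is_tree : Prop := simple_edges /\ connected_graph.

Fixpoint walkb (t : nat) (u v : 'I_n) : bool :=
  if t is t'.+1 then [exists w, adj u w && walkb t' w v] else u == v.

(* graph distance: least t with a walk of length t from u to v
   (in a connected graph on n vertices it is < n) *)
Definition dist (u v : 'I_n) : nat := find (fun t => walkb t u v) (iota 0 n).

Definition dist_ve (j : 'I_n) (i : 'I_k) : nat := minn (dist j (l i)) (dist j (m i)).

Definition headC (i : 'I_k) : {set 'I_n} := [set j | connect (adj_wo i) (m i) j].
Definition tailC (i : 'I_k) : {set 'I_n} := [set j | connect (adj_wo i) (l i) j].

End Graph.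

Definition incidence (R : pzRingType) n k (l m : 'I_k -> 'I_n) : 'M[R]_(n, k) :=
  \matrix_(j, i) ((j == l i) || (j == m i))%:R.

Definition Hmat (R : fieldType) n k (l m : 'I_k -> 'I_n) : 'M[R]_(k, n) :=
  \matrix_(i, j)
    ((-1) ^+ dist_ve l m j i / n%:R *
     (if j \in headC l m i then (#|tailC l m i|)%:R
      else if j \in tailC l m i then (#|headC l m i|)%:R else 0)).

Definition moore_penrose (R : pzRingType) p q (A : 'M[R]_(p, q)) (X : 'M[R]_(q, p)) : Prop :=
  [/\ A *m X *m A = A, X *m A *m X = X,
      (A *m X)^T = A *m X & (X *m A)^T = X *m A].

(* Main.v *)
Require Import Defs.
From mathcomp Require Import all_boot all_order all_algebra zify ring lra.
Set Implicit Arguments. Unset Strict Implicit. Unset Printing Implicit Defensive.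
Import Order.TTheory GRing.Theory Num.Theory.

Lemma connect_ind_gen (T : finType) (e : rel T) (P : T -> Prop) a b :
  P a -> (forall x y, e x y -> P x -> P y) -> connect e a b -> P b.
Proof.
move=> Pa H /connectP[p pth ->]; elim: p a pth Pa => //= c p IH a /andP[eac pth] Pa.
exact: IH pth (H _ _ eac Pa).
Qed.

Section G.
Variables (n' : nat) (l m : 'I_n' -> 'I_n'.+1).
Hypothesis tree : is_tree l m.
Local Notation n := n'.+1.
Local Notation adj := (adj l m).
Local Notation adj_wo := (adj_wo l m).
Local Notation dist := (dist l m).
Local Notation walkb := (walkb l m).



Lemma adj_edge i : adj (l i) (m i).
Proof. by apply/existsP; exists i; rewrite !eqxx. Qed.

Lemma adj_sym : symmetric adj.
Proof.
by move=> x y; apply/existsP/existsP => -[i Hi]; exists i; rewrite orbC.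
Qed.

Lemma adj_wo_sym i : symmetric (adj_wo i).
Proof.
move=> x y /=; apply/existsP/existsP => -[j /andP[Hn Hj]]; exists j; by rewrite Hn orbC.
Qed.

Lemma adj_split i x y : adj x y ->
  adj_wo i x y \/ ((x = l i /\ y = m i) \/ (x = m i /\ y = l i)).
Proof.
move=> /existsP[j Hj]; case: (eqVneq j i) => [ji|nji].
  subst j; right; case/orP: Hj => /andP[/eqP-> /eqP->]; by [left|right].
by left; apply/existsP; exists j; rewrite nji.
Qed.

Lemma walk_cat a b u w v : walkb a u w -> walkb b w v -> walkb (a + b) u v.
Proof.
elim: a u => [|a IH] u /=; first by move/eqP->.
move=> /existsP[x /andP[ux xw]] wv; apply/existsP; exists x; rewrite ux /=.
exact: IH.
Qed.

Lemma walk_path u p : path adj u p -> walkb (size p) u (last u p).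
Proof.
elim: p u => [|x p IH] u /=; first by [].
by move=> /andP[ux pth]; apply/existsP; exists x; rewrite ux IH.
Qed.

Lemma dist_le t u v : walkb t u v -> (dist u v <= t)%N.
Proof.
move=> W; rewrite /Defs.dist; case: (ltnP t n) => tn.
  rewrite leqNgt; apply/negP => /(before_find 0%N); by rewrite nth_iota // add0n W.
by apply: leq_trans (find_size _ _) _; rewrite size_iota.
Qed.

Lemma connected_walk u v : exists2 t, (t < n)%N & walkb t u v.
Proof.
case: tree => _ /(_ u v) /connectP[p pth ->].
case: (shortenP pth) => p' pth' up' _.
exists (size p'); last exact: walk_path.
have := max_card (mem (u :: p')); rewrite card_ord (card_uniqP up') /=.
by [].
Qed.

Lemma dist_walk u v : walkb (dist u v) u v.
Proof.
case: (connected_walk u v) => t tn W.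
have H : has (fun t => walkb t u v) (iota 0 n).
  by apply/hasP; exists t => //; rewrite mem_iota.
have := nth_find 0%N H; have := H; rewrite has_find size_iota => dn.
by rewrite nth_iota // add0n.
Qed.

Lemma dist_lt u v : (dist u v < n)%N.
Proof. by case: (connected_walk u v) => t tn /dist_le /leq_ltn_trans; apply. Qed.

Lemma dist0 u : dist u u = 0%N.
Proof. by apply/eqP; rewrite -leqn0; apply: (@dist_le 0) => /=. Qed.


Lemma adj_wo_connect_sym i : connect_sym (adj_wo i).
Proof. exact/sym_connect_sym/adj_wo_sym. Qed.

Local Open Scope ring_scope.

Lemma sum_delta (R : pzRingType) (F : 'I_n -> R) a :
  \sum_j F j * (j == a)%:R = F a.
Proof.
rewrite (bigD1 a) //= eqxx mulr1 big1 ?addr0 // => j /negbTE->; by rewrite mulr0.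
Qed.

Lemma not_connect_wo i : ~~ connect (adj_wo i) (m i) (l i).
Proof.
apply/negP => C.
have allc : forall u v, connect (adj_wo i) u v.
  move=> u v; case: tree => _ /(_ u v).
  apply: (connect_ind_gen (P := fun x => is_true (connect (adj_wo i) u x))); first exact: connect0.
  move=> x y /(adj_split i) [xy|[[-> ->]|[-> ->]]] ux.
  - by apply: connect_trans ux (connect1 xy).
  - by apply: connect_trans ux _; rewrite adj_wo_connect_sym.
  - exact: connect_trans ux C.
pose N : 'M[rat]_(n, n') := \matrix_(j, i') ((j == l i')%:R - (j == m i')%:R).
pose N' := col' i N.
have rk1 : (\rank N' <= n'.-1)%N by apply: rank_leq_col.
have rk2 : (\rank (kermx N') <= 1)%N.
  apply: leq_trans (rank_leq_row (const_mx 1 : 'rV[rat]_n)).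
  apply: mxrankS; apply/row_subP => r.
  set u := row r _.
  have u0 : u *m N' = 0 by rewrite /u -row_mul mulmx_ker row0.
  have ue : forall x y, adj_wo i x y -> u 0 x = u 0 y.
    move=> x y /existsP[i'' /andP[ni Hi]].
    rewrite eq_sym in ni; case: (unlift_some ni) => j' ei _.
    have := u0; move/rowP/(_ j'); rewrite !mxE /=.
    under eq_bigr do rewrite !mxE -ei mulrBr.
    rewrite sumrB !sum_delta => /eqP; rewrite subr_eq0 => /eqP.
    by case/orP: Hi => /andP[/eqP<- /eqP<-].
  have -> : u = u 0 ord0 *: const_mx 1.
    apply/rowP => j.
    have -> : u 0 j = u 0 ord0.
      apply: (connect_ind_gen (P := fun x => u 0 x = u 0 ord0) _ _ (allc ord0 j)) => // x y.
      by move/ue=> <-.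
    by rewrite [RHS]mxE [in RHS]mxE [const_mx _ _ _]mxE mulr1 mxE.
  exact/scalemx_sub/submx_refl.
move: rk2; rewrite mxrank_ker.
have : (0 < n')%N by case: (i) => ? ?; lia.
move=> h1 h2; lia.
Qed.


Local Close Scope ring_scope.

Lemma head_or_tail i j : connect (adj_wo i) (m i) j || connect (adj_wo i) (l i) j.
Proof.
case: tree => _ /(_ (l i) j).
apply: (connect_ind_gen (P := fun x => is_true (connect (adj_wo i) (m i) x || connect (adj_wo i) (l i) x))).
  by rewrite connect0 orbT.
move=> x y /(adj_split i) [xy|[[-> ->]|[-> ->]]] //.
- by case/orP=> H; apply/orP; [left|right]; apply: connect_trans H (connect1 xy).
- by move=> _; rewrite connect0.
- by move=> _; rewrite connect0 orbT.
Qed.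

Lemma not_head_tail i j : connect (adj_wo i) (m i) j -> connect (adj_wo i) (l i) j -> False.
Proof.
move=> H T; have := not_connect_wo i; rewrite (connect_trans H) //.
by rewrite adj_wo_connect_sym.
Qed.

Lemma cross_gen i a b : adj a b -> ~~ connect (adj_wo i) a b ->
  (forall x y, adj x y -> adj_wo i x y \/ (x = a /\ y = b) \/ (x = b /\ y = a)) ->
  forall j, connect (adj_wo i) a j -> dist j b = (dist j a).+1.
Proof.
move=> ab nab split j aj; apply/eqP; rewrite eqn_leq; apply/andP; split.
  rewrite -[(dist j a).+1]addn1; apply: dist_le; apply: walk_cat (dist_walk _ _) _.
  by apply/existsP; exists b; rewrite ab /=.
have : walkb (dist j b) j b by apply: dist_walk.
move: (dist j b) => t; elim: t j aj => [|t IH] j aj /=.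
  by move/eqP=> ejb; subst j; rewrite aj in nab.
case/existsP=> w /andP[jw wb].
case: (split _ _ jw) => [jw'|[[ja wb']|[jb _]]].
- have aw : connect (adj_wo i) a w by apply: connect_trans aj (connect1 jw').
  have := IH w aw wb => H.
  apply: leq_trans H; apply: (@dist_le (dist w a).+1) => /=.
  by apply/existsP; exists w; rewrite jw dist_walk.
- by subst j; rewrite dist0.
- by subst j; rewrite aj in nab.
Qed.

Lemma cross_head i j : connect (adj_wo i) (m i) j -> dist j (l i) = (dist j (m i)).+1.
Proof.
apply: cross_gen; first by rewrite adj_sym adj_edge.
  exact: not_connect_wo.
move=> x y /(adj_split i); tauto.
Qed.

Lemma cross_tail i j : connect (adj_wo i) (l i) j -> dist j (m i) = (dist j (l i)).+1.
Proof.
apply: cross_gen; first by rewrite adj_edge.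
  by rewrite adj_wo_connect_sym not_connect_wo.
move=> x y /(adj_split i); tauto.
Qed.

Definition col (j : 'I_n) := odd (dist ord0 j).

Lemma col_edge i : col (l i) = ~~ col (m i).
Proof.
rewrite /col; case/orP: (head_or_tail i ord0) => [/cross_head|/cross_tail] ->.
  by [].
by rewrite /= negbK.
Qed.

Lemma col_adj x y : adj x y -> col y = ~~ col x.
Proof.
case/existsP=> i /orP[] /andP[/eqP<- /eqP<-]; rewrite col_edge //.
by rewrite negbK.
Qed.

Lemma walk_parity t u v : walkb t u v -> odd t = col u (+) col v.
Proof.
elim: t u => [|t IH] u /=; first by move/eqP->; rewrite addbb.
case/existsP=> w /andP[uw /IH->]; rewrite (col_adj uw).
by case: (col u); case: (col v).
Qed.

Lemma dist_parity u v : odd (dist u v) = col u (+) col v.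
Proof. exact/walk_parity/dist_walk. Qed.


Local Open Scope ring_scope.
Variable R : realFieldType.

Definition sgn (j : 'I_n) : R := (-1) ^+ col j.

Lemma sgn_edge i : sgn (l i) = - sgn (m i).
Proof. by rewrite /sgn col_edge signrN. Qed.

Lemma sgnK j : sgn j * sgn j = 1.
Proof. by rewrite /sgn -signr_addb addbb. Qed.

Lemma sign_dist u v : (-1) ^+ dist u v = sgn u * sgn v :> R.
Proof. by rewrite -signr_odd dist_parity signr_addb. Qed.

Lemma card_ht i : (#|headC l m i| + #|tailC l m i|)%N = n.
Proof.
rewrite -cardsUI.
have -> : headC l m i :&: tailC l m i = set0.
  apply/setP => j; rewrite !inE; apply/negP => /andP[H T]; exact: not_head_tail H T.
have -> : headC l m i :|: tailC l m i = setT.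
  by apply/setP => j; rewrite !inE head_or_tail.
by rewrite cards0 addn0 cardsT card_ord.
Qed.

Lemma Hentry i j : Hmat R l m i j =
  if connect (adj_wo i) (m i) j then sgn j * sgn (m i) / n%:R * (#|tailC l m i|)%:R
  else sgn j * sgn (l i) / n%:R * (#|headC l m i|)%:R.
Proof.
rewrite mxE /dist_ve !inE.
case: ifP => hj.
  rewrite cross_head // minnC (minn_idPl (leqnSn _)) sign_dist //.
have tj : connect (adj_wo i) (l i) j by have := head_or_tail i j; rewrite hj.
by rewrite tj cross_tail // (minn_idPl (leqnSn _)) sign_dist.
Qed.


Lemma n_neq0 : n%:R != 0 :> R.
Proof. by rewrite pnatr_eq0. Qed.

Lemma inc_split (j a b : 'I_n) : a != b ->
  ((j == a) || (j == b))%:R = (j == a)%:R + (j == b)%:R :> R.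
Proof.
move=> ab; case: (eqVneq j a) => [->|_]; last by rewrite add0r.
by rewrite (negbTE ab) addr0.
Qed.

Lemma lm_neq i : l i != m i.
Proof. by case: tree => [[lt _] _]; rewrite neq_ltn lt. Qed.

Lemma HM : Hmat R l m *m incidence R l m = 1%:M.
Proof.
apply/matrixP => i i'; rewrite [LHS]mxE [RHS]mxE.
under eq_bigr do rewrite [incidence _ _ _ _ _]mxE inc_split ?lm_neq // mulrDr.
rewrite big_split /= !sum_delta.
case: (eqVneq i i') => [<-|nii] /=.
  rewrite !Hentry connect0.
  have -> : connect (adj_wo i) (m i) (l i) = false by apply/negbTE/not_connect_wo.
  rewrite !sgnK !mul1r -mulrDr -natrD card_ht mulVf //; exact: n_neq0.
have e : adj_wo i (l i') (m i').
  by apply/existsP; exists i'; rewrite eq_sym nii !eqxx.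
rewrite !Hentry.
case: (boolP (connect (adj_wo i) (m i) (l i'))) => H1.
  rewrite (connect_trans H1 (connect1 e)) sgn_edge; ring.
case: (boolP (connect (adj_wo i) (m i) (m i'))) => H2.
  by case/negP: H1; apply: connect_trans H2 _; rewrite adj_wo_connect_sym connect1.
rewrite sgn_edge; ring.
Qed.


Definition svec : 'cV[R]_n := \col_j sgn j.

Lemma Hs : Hmat R l m *m svec = 0.
Proof.
apply/matrixP => i k; rewrite [LHS]mxE [RHS]mxE.
under eq_bigr do rewrite [svec _ _]mxE Hentry.
set P := fun j => connect (adj_wo i) (m i) j.
rewrite (bigID P) /=.
rewrite (eq_bigr (fun=> sgn (m i) / n%:R * (#|tailC l m i|)%:R)); last first.
  by move=> j Pj; rewrite /P in Pj; rewrite Pj -[RHS]mul1r -(sgnK j); ring.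
rewrite [X in _ + X = _](eq_bigr (fun=> sgn (l i) / n%:R * (#|headC l m i|)%:R)); last first.
  by move=> j Pj; rewrite /P in Pj; rewrite (negbTE Pj) -[RHS]mul1r -(sgnK j); ring.
rewrite !sumr_const.
have -> : #|P| = #|headC l m i| by rewrite cardsE.
have -> : #|[pred j | ~~ P j]| = #|tailC l m i|.
  apply: eq_card => j; rewrite /P inE /= [in RHS]inE.
  case: (boolP (connect (adj_wo i) (m i) j)) => hj.
    by case: (boolP (connect (adj_wo i) (l i) j)) => // tj; case: (not_head_tail hj tj).
  by have := head_or_tail i j; rewrite (negbTE hj).
rewrite sgn_edge; set a := (#|tailC l m i|)%:R; set b := (#|headC l m i|)%:R.
rewrite -mulr_natr -/b -mulr_natr -/a; ring.
Qed.

Lemma sM : svec^T *m incidence R l m = 0.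
Proof.
apply/matrixP => k i; rewrite [LHS]mxE [RHS]mxE.
under eq_bigr do rewrite [incidence _ _ _ _ _]mxE inc_split ?lm_neq // mulrDr !mxE.
by rewrite big_split /= !sum_delta sgn_edge addNr.
Qed.

Lemma ss : svec^T *m svec = n%:R%:M.
Proof.
apply/matrixP => a b; rewrite !ord1 [LHS]mxE [RHS]mxE eqxx mulr1n.
under eq_bigr do rewrite !mxE sgnK.
by rewrite sumr_const card_ord.
Qed.


Lemma MH : incidence R l m *m Hmat R l m = 1%:M - svec *m (n%:R^-1 *: svec^T).
Proof.
have CB : col_mx (n%:R^-1 *: svec^T) (Hmat R l m) *m row_mx svec (incidence R l m) = 1%:M.
  rewrite mul_col_row -!scalemxAl ss sM scaler0 Hs HM (scalar_mx_block 1 n').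
  congr block_mx; apply/matrixP => a b; rewrite !ord1 !mxE eqxx !mulr1n mulVf //.
  exact: n_neq0.
have F := @mulmx1C _ n _ _ CB.
have G : svec *m (n%:R^-1 *: svec^T) + incidence R l m *m Hmat R l m = 1%:M.
  by rewrite -mul_row_col; exact: F.
rewrite -G.
by rewrite addrAC subrr add0r.
Qed.

End G.

Theorem mainTheorem2 (R : realFieldType) (n : nat) (l m : 'I_n.-1 -> 'I_n) :
  (0 < n)%N -> is_tree l m ->
  moore_penrose (incidence R l m) (Hmat R l m).
Proof.
case: n l m => [//|n'] l m _ tree; split.
- by rewrite -mulmxA (HM tree) mulmx1.
- by rewrite (HM tree) mul1mx.
- rewrite (MH tree); apply/matrixP => a b; rewrite !mxE big_ord1 !mxE big_ord1 !mxE eq_sym; ring.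
- by rewrite (HM tree) trmx1.
Qed.
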